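(* If $n$ is a positive even integer, then $$\sum_{k=1}^\infty\frac{5^kF_n^{2k}}{L_n^{2k}(2k-1)(2k)(2k+1)}=\ln 2-\ln(L_n)+\frac{n}{\sqrt5}\,\frac{L_{2n}}{F_{2n}}\ln\alpha-\frac12.$$
   Context: $F_n$ and $L_n$ are the Fibonacci and Lucas numbers: $F_0=0,F_1=1$, $L_0=2,L_1=1$, and both satisfy $X_n=X_{n-1}+X_{n-2}$ (extended to all $n\in\mathbb Z$); equivalently $F_n=(\alpha^n-\beta^n)/(\alpha-\beta)$, $L_n=\alpha^n+\beta^n$ with $\alpha=(1+\sqrt5)/2$, $\beta=(1-\sqrt5)/2$. *)

(* Defs.v *)
From Stdlib Require Import Reals Lra Lia Arith.
From Coquelicot Require Import Coquelicot.
Open Scope R_scope.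

Fixpoint fib (n : nat) : R :=
  match n with
  | O => 0
  | S O => 1
  | S ((S m) as p) => fib p + fib m
  end.

Fixpoint lucas (n : nat) : R :=
  match n with
  | O => 2
  | S O => 1
  | S ((S m) as p) => lucas p + lucas m
  end.

Definition alpha : R := (1 + sqrt 5) / 2.

(* Main.v *)
Require Import Defs.
From Stdlib Require Import Reals Arith Lra Lia.
From Coquelicot Require Import Coquelicot.
Open Scope R_scope.


Lemma rad_ge (a : nat -> R) (Ha : forall n, Rabs (a n) <= 1) (x : R) :
  Rabs x < 1 -> Rbar_lt (Rabs x) (CV_radius a).
Proof.
  intros Hx.
  set (r := (Rabs x + 1) / 2).
  assert (Hr0 : 0 <= r) by (unfold r; pose proof (Rabs_pos x); lra).
  assert (Hr1 : r < 1) by (unfold r; lra).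
  assert (Hd : CV_disk a r).
  { unfold CV_disk.
    apply (@ex_series_le R_AbsRing R_CompleteNormedModule _ (fun n => r ^ n)).
    - intros n. unfold norm; simpl. unfold abs; simpl.
      rewrite Rabs_Rabsolu, Rabs_mult, <- RPow_abs, (Rabs_pos_eq r Hr0).
      rewrite <- (Rmult_1_l (r ^ n)) at 2.
      apply Rmult_le_compat_r. apply pow_le; lra. auto.
    - apply ex_series_geom. rewrite Rabs_pos_eq; lra. }
  pose proof (proj1 (Lub_Rbar_correct (CV_disk a)) r Hd) as H.
  change (Rbar_le r (CV_radius a)) in H.
  destruct (CV_radius a) as [c| |]; simpl in *; try easy.
  unfold r in H; lra.
Qed.

Lemma zero_deriv (f : R -> R) :
  (forall t, -1 < t < 1 -> is_derive f t 0) -> f 0 = 0 ->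
  forall x, -1 < x < 1 -> f x = 0.
Proof.
  intros Hd H0 x Hx.
  destruct (Rtotal_order x 0) as [Hlt|[Heq|Hgt]].
  - rewrite <- H0. apply (@eq_is_derive R_NormedModule f x 0); [|lra].
    intros t Ht. apply Hd. lra.
  - subst; auto.
  - rewrite <- H0. symmetry. apply (@eq_is_derive R_NormedModule f 0 x); [|lra].
    intros t Ht. apply Hd. lra.
Qed.

Definition lc (k : nat) : R := match k with O => 0 | S j => / INR (S j) end.

Lemma log_series (t : R) : Rabs t < 1 ->
  is_series (fun m => t ^ (S m) / INR (S m)) (- ln (1 - t)).
Proof.
  intros Ht.
  assert (Hb : forall n, Rabs (lc n) <= 1).
  { intros [|n]; unfold lc. rewrite Rabs_R0; lra.
    rewrite Rabs_pos_eq. rewrite <- Rinv_1. apply Rinv_le_contravar. lra.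
    rewrite S_INR; pose proof (pos_INR n); lra.
    left; apply Rinv_0_lt_compat; rewrite S_INR; pose proof (pos_INR n); lra. }
  assert (Hrad : forall u, Rabs u < 1 -> Rbar_lt (Rabs u) (CV_radius lc)) by
    (intros; apply rad_ge; auto).
  assert (HD : forall u, Rabs u < 1 -> PSeries (PS_derive lc) u = / (1 - u)).
  { intros u Hu. apply is_pseries_unique. apply is_pseries_R.
    eapply is_series_ext; [|apply (is_series_geom u Hu)].
    intros n. unfold PS_derive. replace (n+1)%nat with (S n) by lia.
    change (u ^ n = INR (S n) * / INR (S n) * u ^ n). field. apply not_0_INR. lia. }
  assert (Heq : PSeries lc t = - ln (1 - t)).
  { assert (forall x, -1 < x < 1 -> (fun x => PSeries lc x + ln (1 - x)) x = 0).
    { apply zero_deriv.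
      - intros u Hu.
        assert (Hu' : Rabs u < 1) by (apply Rabs_def1; lra).
        replace 0 with (PSeries (PS_derive lc) u + (/ (1 - u)) * (-1)).
        2:{ rewrite HD by auto. field. lra. }
        apply (is_derive_plus (fun x => PSeries lc x) (fun x => ln (1 - x))).
        apply is_derive_PSeries; auto.
        auto_derive. lra. unfold Rminus; field; lra.
      - simpl. rewrite PSeries_0. simpl. rewrite Rminus_0_r, ln_1. ring. }
    specialize (H t). simpl in H. pose proof (Rabs_def2 _ _ Ht). lra. }
  pose proof (PSeries_correct lc t (CV_radius_inside lc t (Hrad t Ht))) as HP.
  rewrite Heq in HP. apply is_pseries_R in HP.
  apply (is_series_ext (fun k => lc (S k) * t^(S k))).
  - intros n. change ((/ INR (S n)) * t ^ S n = t ^ S n / INR (S n)). unfold Rdiv; ring.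
  - apply (is_series_incr_1 (fun k => lc k * t^k)).
    match goal with |- is_series _ ?L => replace L with (- ln (1 - t)) end. exact HP.
    unfold plus; simpl. ring.
Qed.

Lemma zero_series : is_series (fun _ : nat => 0) 0.
Proof.
  pose proof (is_series_scal_r 0 _ _ (is_series_geom 0 ltac:(rewrite Rabs_R0; lra))) as H.
  assert (E : / (1 - 0) * 0 = 0) by field. rewrite E in H.
  eapply is_series_ext; [|exact H].
  intros n. simpl. ring.
Qed.

Definition ac (k : nat) : R := if Nat.even k then 0 else / INR k.

Lemma atanh_series (x : R) : 0 < x < 1 ->
  is_series (fun m => (x ^ 2) ^ m / (2 * INR m + 1)) ((ln (1 + x) - ln (1 - x)) / (2 * x)).
Proof.
  intros Hx.
  assert (Hb : forall n, Rabs (ac n) <= 1).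
  { intros [|n]; unfold ac. simpl. rewrite Rabs_R0; lra.
    destruct (Nat.even (S n)). rewrite Rabs_R0; lra.
    rewrite Rabs_pos_eq. rewrite <- Rinv_1. apply Rinv_le_contravar. lra.
    rewrite S_INR; pose proof (pos_INR n); lra.
    left; apply Rinv_0_lt_compat; rewrite S_INR; pose proof (pos_INR n); lra. }
  assert (Hrad : forall u, Rabs u < 1 -> Rbar_lt (Rabs u) (CV_radius ac)) by
    (intros; apply rad_ge; auto).
  assert (Hsq : forall u, Rabs u < 1 -> Rabs (u ^ 2) < 1).
  { intros u Hu. rewrite <- RPow_abs. pose proof (Rabs_pos u). nra. }
  assert (HD : forall u, Rabs u < 1 -> PSeries (PS_derive ac) u = / (1 - u ^ 2)).
  { intros u Hu. apply is_pseries_unique.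
    replace (/ (1 - u ^ 2)) with (/ (1 - u ^ 2) + u * 0) by ring.
    apply is_pseries_odd_even.
    - apply is_pseries_R. eapply is_series_ext; [|apply (is_series_geom _ (Hsq u Hu))].
      intros n. unfold PS_derive, ac. replace (S (2 * n)) with (2 * n + 1)%nat by lia.
      rewrite Nat.even_odd. match goal with |- ?A = ?B => change (@eq R A B) end. field. apply not_0_INR. lia.
    - apply is_pseries_R. eapply is_series_ext; [|apply zero_series].
      intros n. unfold PS_derive, ac.
      replace (S (2 * n + 1))%nat with (2 * (n + 1))%nat by lia. rewrite Nat.even_even.
      match goal with |- ?A = ?B => change (@eq R A B) end. ring. }
  assert (Heq : PSeries ac x = (ln (1 + x) - ln (1 - x)) / 2).
  { assert (forall y, -1 < y < 1 -> (fun y => PSeries ac y - (ln (1 + y) - ln (1 - y)) / 2) y = 0).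
    { apply zero_deriv.
      - intros u Hu.
        assert (Hu' : Rabs u < 1) by (apply Rabs_def1; lra).
        replace 0 with (PSeries (PS_derive ac) u - (/ (1 + u) - / (1 - u) * (-1)) / 2).
        2:{ rewrite HD by auto. field. repeat split; nra. }
        apply (is_derive_minus (fun y => PSeries ac y) (fun y => (ln (1 + y) - ln (1 - y)) / 2)).
        apply is_derive_PSeries; auto.
        auto_derive. repeat split; lra. match goal with |- ?A = ?B => change (@eq R A B) end. field. lra.
      - simpl. rewrite PSeries_0. unfold ac; simpl. rewrite Rplus_0_r, Rminus_0_r, ln_1. field. }
    specialize (H x). simpl in H. lra. }
  assert (Hx2 : Rabs (x ^ 2) < 1) by (apply Hsq; rewrite Rabs_pos_eq; lra).
  assert (Hex : ex_pseries (fun n => ac (2 * n + 1)) (x ^ 2)).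
  { apply CV_radius_inside. apply rad_ge; auto. }
  set (T := PSeries (fun n => ac (2 * n + 1)) (x ^ 2)).
  pose proof (PSeries_correct _ _ Hex) as HT. fold T in HT.
  assert (Hfull : is_pseries ac x (0 + x * T)).
  { apply is_pseries_odd_even; auto.
    apply is_pseries_R. eapply is_series_ext; [|apply zero_series].
    intros n. unfold ac. rewrite Nat.even_even.
    match goal with |- ?A = ?B => change (@eq R A B) end. ring. }
  apply is_pseries_unique in Hfull. rewrite Heq in Hfull.
  assert (HTv : T = (ln (1 + x) - ln (1 - x)) / (2 * x)).
  { apply (Rmult_eq_reg_l x). rewrite Rplus_0_l in Hfull. rewrite <- Hfull. field. lra. lra. }
  rewrite <- HTv.
  apply is_pseries_R in HT.
  eapply is_series_ext; [|exact HT].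
  intros n. unfold ac. rewrite Nat.even_odd.
  match goal with |- ?A = ?B => change (@eq R A B) end.
  rewrite plus_INR, mult_INR. simpl. field.
  pose proof (pos_INR n). lra.
Qed.

Lemma sR_plus a b la lb : is_series a la -> is_series b lb ->
  is_series (fun n => a n + b n) (la + lb).
Proof. intros; apply (@is_series_plus R_AbsRing R_NormedModule); auto. Qed.

Lemma sR_minus a b la lb : is_series a la -> is_series b lb ->
  is_series (fun n => a n - b n) (la - lb).
Proof. intros; apply (@is_series_minus R_AbsRing R_NormedModule); auto. Qed.

Lemma sR_conv (a b : nat -> R) l l' : is_series a l -> l = l' -> (forall n, a n = b n) ->
  is_series b l'.
Proof. intros H E Hn; subst. eapply is_series_ext; eauto. Qed.

Lemma main_series (x : R) : 0 < x < 1 ->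
  let T := (ln (1 + x) - ln (1 - x)) / (2 * x) in
  is_series (fun m => let k := S m in
     (x ^ 2) ^ k / ((2 * INR k - 1) * (2 * INR k) * (2 * INR k + 1)))
   (/ 2 * ((x ^ 2) * T - (- ln (1 - x ^ 2)) + (T - 1))).
Proof.
  intros Hx T.
  set (y := x ^ 2).
  assert (Hy : 0 < y < 1) by (unfold y; nra).
  pose proof (atanh_series x Hx) as HA. fold y T in HA.
  assert (H1 : is_series (fun m => y ^ S m / (2 * INR (S m) - 1)) (y * T)).
  { eapply sR_conv. apply (is_series_scal_r y _ _ HA). apply Rmult_comm.
    intros n. rewrite S_INR. simpl. field. pose proof (pos_INR n). lra. }
  assert (H2 : is_series (fun m => y ^ S m / INR (S m)) (- ln (1 - y))).
  { apply log_series. rewrite Rabs_pos_eq; lra. }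
  assert (H3 : is_series (fun m => y ^ S m / (2 * INR (S m) + 1)) (T - 1)).
  { apply (is_series_incr_1 (fun m => y ^ m / (2 * INR m + 1))).
    match goal with |- is_series _ ?L => replace L with T end. exact HA.
    unfold plus; simpl. field. }
  eapply sR_conv. apply (is_series_scal_l (/ 2)). apply sR_plus. apply sR_minus.
  exact H1. exact H2. exact H3. reflexivity.
  intros n. cbv zeta.
  assert (E : / 2 * (y ^ S n / (2 * INR (S n) - 1) - y ^ S n / INR (S n) + y ^ S n / (2 * INR (S n) + 1))
     = y ^ S n / ((2 * INR (S n) - 1) * (2 * INR (S n)) * (2 * INR (S n) + 1))).
  { rewrite S_INR. field. pose proof (pos_INR n). repeat split; lra. }
  exact E.
Qed.

Definition beta : R := (1 - sqrt 5) / 2.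

Lemma s5 : sqrt 5 * sqrt 5 = 5.
Proof. apply sqrt_sqrt; lra. Qed.

Lemma s5pos : 0 < sqrt 5.
Proof. apply sqrt_lt_R0; lra. Qed.

Lemma alpha2 : forall X, alpha * (alpha * X) = alpha * X + X.
Proof. intros X. pose proof s5 as Hs.
  assert (E : alpha * alpha - (alpha + 1) = (sqrt 5 * sqrt 5 - 5) / 4) by (unfold alpha; field).
  rewrite Hs in E. replace (alpha * (alpha * X)) with ((alpha * alpha) * X) by ring.
  replace (alpha * alpha) with (alpha + 1) by lra. ring. Qed.

Lemma beta2 : forall X, beta * (beta * X) = beta * X + X.
Proof. intros X. pose proof s5 as Hs.
  assert (E : beta * beta - (beta + 1) = (sqrt 5 * sqrt 5 - 5) / 4) by (unfold beta; field).
  rewrite Hs in E. replace (beta * (beta * X)) with ((beta * beta) * X) by ring.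
  replace (beta * beta) with (beta + 1) by lra. ring. Qed.

Lemma binet_aux n :
  (fib n = (alpha ^ n - beta ^ n) / sqrt 5 /\ lucas n = alpha ^ n + beta ^ n) /\
  (fib (S n) = (alpha ^ S n - beta ^ S n) / sqrt 5 /\ lucas (S n) = alpha ^ S n + beta ^ S n).
Proof.
  pose proof s5pos as Hp. pose proof s5 as Hs.
  induction n as [|n [[IH1 IH2] [IH3 IH4]]].
  - simpl. unfold alpha, beta. split; split; field; lra.
  - split; [split; assumption|].
    change (fib (S (S n))) with (fib (S n) + fib n).
    change (lucas (S (S n))) with (lucas (S n) + lucas n).
    rewrite IH1, IH2, IH3, IH4. simpl. rewrite alpha2, beta2. split; field; lra.
Qed.

Theorem theorem10 (n : nat) (Hpos : (0 < n)%nat) (Heven : Nat.Even n) :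
  is_series
    (fun m : nat =>
       let k := S m in
       (5 ^ k * fib n ^ (2 * k)) /
       (lucas n ^ (2 * k) * (2 * INR k - 1) * (2 * INR k) * (2 * INR k + 1)))
    (ln 2 - ln (lucas n)
     + INR n / sqrt 5 * (lucas (2 * n) / fib (2 * n)) * ln alpha - 1 / 2).
Proof.
  pose proof s5 as Hs. pose proof s5pos as Hsp.
  assert (Hs1 : 1 < sqrt 5) by nra.
  assert (Hal : 1 < alpha) by (unfold alpha; lra).
  set (a := alpha ^ n).
  assert (Ha1 : 1 < a) by (apply Rlt_pow_R1; auto).
  assert (Hab : a * beta ^ n = 1).
  { unfold a. rewrite <- Rpow_mult_distr.
    replace (alpha * beta) with (-1).
    2:{ unfold alpha, beta. replace ((1 + sqrt 5) / 2 * ((1 - sqrt 5) / 2)) with ((1 - sqrt 5 * sqrt 5) / 4) by field.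
        rewrite Hs. field. }
    destruct Heven as [j Hj]. rewrite Hj, pow_mult. replace ((-1) ^ 2) with 1 by ring. apply pow1. }
  assert (Hb : beta ^ n = / a) by (apply (Rmult_eq_reg_l a); [rewrite Hab; field; lra | lra]).
  destruct (binet_aux n) as [[HF HL] _].
  destruct (binet_aux (2 * n)) as [[HF2 HL2] _].
  rewrite Nat.mul_comm, !pow_mult in HF2, HL2. fold a in HF, HL, HF2, HL2.
  rewrite Hb in HF, HL, HF2, HL2. rewrite Nat.mul_comm.
  set (F := fib n) in *. set (L := lucas n) in *.
  rewrite HF2, HL2.
  assert (HLp : 0 < L) by (rewrite HL; pose proof (Rinv_0_lt_compat a ltac:(lra)); lra).
  assert (Hai : / a < 1) by (rewrite <- Rinv_1; apply Rinv_lt_contravar; lra).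
  assert (Haip : 0 < / a) by (apply Rinv_0_lt_compat; lra).
  set (x := (a - / a) / (a + / a)).
  assert (Hx : 0 < x < 1).
  { unfold x. split. apply Rdiv_lt_0_compat; lra.
    apply (Rmult_lt_reg_r (a + / a)). lra. unfold Rdiv. rewrite Rmult_assoc, Rinv_l by lra. lra. }
  assert (Hx0 : x <> 0) by lra.
  assert (HxF : x = sqrt 5 * F / L).
  { unfold x. rewrite HF, HL. field. repeat split; nra. }
  assert (Hx2 : x ^ 2 = 5 * F ^ 2 * / L ^ 2).
  { rewrite HxF. replace ((sqrt 5 * F / L) ^ 2) with ((sqrt 5 * sqrt 5) * F ^ 2 * / L ^ 2) by (field; lra).
    rewrite Hs. reflexivity. }
  assert (HT : ln (1 + x) - ln (1 - x) = 2 * (INR n * ln alpha)).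
  { rewrite <- ln_div by lra.
    replace ((1 + x) / (1 - x)) with (a * a).
    2:{ unfold x. field. repeat split; nra. }
    rewrite ln_mult by lra. unfold a. rewrite ln_pow by lra. ring. }
  assert (Hl : ln (1 - x ^ 2) = 2 * ln 2 - 2 * ln L).
  { replace (1 - x ^ 2) with ((2 * 2) / (L * L)).
    2:{ rewrite HL. unfold x. field. repeat split; nra. }
    rewrite ln_div, !ln_mult by nra. ring. }
  pose proof (main_series x Hx) as HM. cbv zeta in HM.
  eapply sR_conv. exact HM.
  - match goal with |- ?A = ?B => change (@eq R A B) end.
    rewrite HT, Hl. unfold x. rewrite HL. field.
    pose proof (Rlt_pow_R1 (a*a) 2 ltac:(nra) ltac:(lia)). repeat split; nra.
  - intros m. cbv beta zeta. rewrite Hx2. rewrite !Rpow_mult_distr, pow_inv, !pow_mult.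
    field. rewrite S_INR. pose proof (pos_INR m).
    pose proof (pow_nonzero (L ^ 2) (S m) ltac:(nra)). repeat split; auto; lra.
Qed.
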